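(* Every Cantor space $(X,d)$ has the property*.
   Context: A Cantor space is a compact metric space $(X,d)$ with no isolated points that is totally disconnected (equivalently, of topological dimension zero). $\mathcal{H}(X)$ denotes the set of homeomorphisms of $X$. For continuous maps $f,g:X\to X$ let $d_{C^0}(f,g)=\sup_{x\in X}d(f(x),g(x))$, and for $f,g\in\mathcal{H}(X)$ let $D(f,g)=\max\{d_{C^0}(f,g),d_{C^0}(f^{-1},g^{-1})\}$. An $n$-tuple $(x_1,\dots,x_n)\in X^n$ is proper if $x_i\neq x_j$ for all $1\le i<j\le n$. On $X^n$ use $d_n(\zeta,\eta)=\max_{1\le i\le n}d(x_i,y_i)$ for $\zeta=(x_1,\dots,x_n)$, $\eta=(y_1,\dots,y_n)$, and for a map $\phi$ write $\phi^{(n)}(\zeta)=(\phi(x_1),\dots,\phi(x_n))$. A compact metric space $(X,d)$ has the property* if for every $\epsilon>0$ there is $\delta>0$ such that for every integer $n\ge1$ and every pair of proper $n$-tuples $\zeta,\eta\in X^n$ with $d_n(\zeta,\eta)<\delta$, there exists $\phi\in\mathcal{H}(X)$ with $D(\phi,\mathrm{id}_X)<\epsilon$ and $\phi^{(n)}(\zeta)=\eta$. *)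

(* Defs.v *)
From Stdlib Require Import Reals List.
Open Scope R_scope.

Definition is_metric {X : Type} (d : X -> X -> R) : Prop :=
  (forall x y, 0 <= d x y) /\
  (forall x y, d x y = 0 <-> x = y) /\
  (forall x y, d x y = d y x) /\
  (forall x y z, d x z <= d x y + d y z).

Definition is_open {X : Type} (d : X -> X -> R) (U : X -> Prop) : Prop :=
  forall x, U x -> exists r, 0 < r /\ forall y, d x y < r -> U y.

Definition is_compact {X : Type} (d : X -> X -> R) : Prop :=
  forall (I : Type) (U : I -> X -> Prop),
    (forall i, is_open d (U i)) ->
    (forall x, exists i, U i x) ->
    exists l : list I, forall x, exists i, In i l /\ U i x.

Definition no_isolated_points {X : Type} (d : X -> X -> R) : Prop :=
  forall x eps, 0 < eps -> exists y, y <> x /\ d x y < eps.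

Definition is_connected_subset {X : Type} (d : X -> X -> R) (A : X -> Prop) : Prop :=
  forall U V : X -> Prop, is_open d U -> is_open d V ->
    (forall x, A x -> U x \/ V x) ->
    (forall x, A x -> U x -> V x -> False) ->
    (forall x, A x -> U x) \/ (forall x, A x -> V x).

Definition totally_disconnected {X : Type} (d : X -> X -> R) : Prop :=
  forall A : X -> Prop, is_connected_subset d A ->
    forall x y, A x -> A y -> x = y.

Definition is_cantor_space {X : Type} (d : X -> X -> R) : Prop :=
  is_metric d /\ is_compact d /\ no_isolated_points d /\ totally_disconnected d.

Definition continuous_map {X : Type} (d : X -> X -> R) (f : X -> X) : Prop :=
  forall x eps, 0 < eps -> exists delta, 0 < delta /\
    forall y, d x y < delta -> d (f x) (f y) < eps.

Definition is_homeo {X : Type} (d : X -> X -> R) (phi psi : X -> X) : Prop :=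
  continuous_map d phi /\ continuous_map d psi /\
  (forall x, psi (phi x) = x) /\ (forall x, phi (psi x) = x).

(* D(phi, id) < eps, i.e. max(sup_x d(phi x, x), sup_x d(phi^-1 x, x)) < eps *)
Definition D_id_lt {X : Type} (d : X -> X -> R) (phi psi : X -> X) (eps : R) : Prop :=
  exists c, c < eps /\ forall x, d (phi x) x <= c /\ d (psi x) x <= c.

(* n-tuples are functions nat -> X, only indices i < n matter *)
Definition proper_tuple {X : Type} (n : nat) (z : nat -> X) : Prop :=
  forall i j, (i < n)%nat -> (j < n)%nat -> i <> j -> z i <> z j.

Definition dn_lt {X : Type} (d : X -> X -> R) (n : nat) (z w : nat -> X) (delta : R) : Prop :=
  forall i, (i < n)%nat -> d (z i) (w i) < delta.

Definition property_star {X : Type} (d : X -> X -> R) : Prop :=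
  forall eps, 0 < eps -> exists delta, 0 < delta /\
    forall (n : nat) (z w : nat -> X), (1 <= n)%nat ->
      proper_tuple n z -> proper_tuple n w -> dn_lt d n z w delta ->
      exists phi psi : X -> X, is_homeo d phi psi /\ D_id_lt d phi psi eps /\
        forall i, (i < n)%nat -> phi (z i) = w i.

(* Main.v *)
Require Import Defs.
From Stdlib Require Import Reals Lra Lia List Classical ClassicalEpsilon.
Open Scope R_scope.

Lemma choice_fun {A B : Type} (P : A -> B -> Prop) :
  (forall a, exists b, P a b) -> exists f : A -> B, forall a, P a (f a).
Proof.
  intros H. exists (fun a => proj1_sig (constructive_indefinite_description _ (H a))).
  intro a. exact (proj2_sig (constructive_indefinite_description _ (H a))).
Qed.

Section S.
Variable X : Type.
Variable d : X -> X -> R.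
Hypothesis Hm : is_metric d.

Lemma d_nonneg x y : 0 <= d x y. Proof. apply Hm. Qed.
Lemma d_refl x : d x x = 0. Proof. apply (proj1 (proj2 Hm)). reflexivity. Qed.
Lemma d_eq x y : d x y = 0 -> x = y. Proof. apply (proj1 (proj2 Hm)). Qed.
Lemma d_sym x y : d x y = d y x. Proof. apply Hm. Qed.
Lemma d_tri x y z : d x z <= d x y + d y z. Proof. apply Hm. Qed.

Lemma d_pos x y : x <> y -> 0 < d x y.
Proof. intro H. destruct (d_nonneg x y) as [H1|H1]; auto. exfalso; apply H, d_eq; auto. Qed.

Definition clopen (C : X -> Prop) := is_open d C /\ is_open d (fun y => ~ C y).

Lemma open_ball x r : is_open d (fun y => d x y < r).
Proof.
  intros y Hy. exists (r - d x y). split. lra.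
  intros z Hz. pose proof (d_tri x y z). lra.
Qed.

Lemma open_ext (P Q : X -> Prop) : (forall y, P y <-> Q y) -> is_open d P -> is_open d Q.
Proof.
  intros E HP x Hx. destruct (HP x (proj2 (E x) Hx)) as [r [Hr H]].
  exists r; split; auto. intros y Hy; apply E; auto.
Qed.

Lemma clopen_ext (P Q : X -> Prop) : (forall y, P y <-> Q y) -> clopen P -> clopen Q.
Proof.
  intros E [H1 H2]; split.
  - eapply open_ext; eauto.
  - eapply open_ext; [|exact H2]. intro y; simpl. rewrite (E y). tauto.
Qed.

Lemma open_True : is_open d (fun _ => True).
Proof. intros x _; exists 1; split; auto; lra. Qed.
Lemma open_False : is_open d (fun _ => False).
Proof. intros x []. Qed.

Lemma open_and P Q : is_open d P -> is_open d Q -> is_open d (fun y => P y /\ Q y).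
Proof.
  intros HP HQ x [Px Qx]. destruct (HP x Px) as [r1 [Hr1 H1]]. destruct (HQ x Qx) as [r2 [Hr2 H2]].
  exists (Rmin r1 r2); split. apply Rmin_pos; auto.
  intros y Hy. split; [apply H1|apply H2]; pose proof (Rmin_l r1 r2); pose proof (Rmin_r r1 r2); lra.
Qed.

Lemma open_or P Q : is_open d P -> is_open d Q -> is_open d (fun y => P y \/ Q y).
Proof.
  intros HP HQ x [Px|Qx].
  - destruct (HP x Px) as [r [Hr H]]. exists r; split; auto.
  - destruct (HQ x Qx) as [r [Hr H]]. exists r; split; auto.
Qed.

Lemma clopen_True : clopen (fun _ => True).
Proof. split. apply open_True. eapply open_ext; [|apply open_False]. intro; simpl; tauto. Qed.
Lemma clopen_False : clopen (fun _ => False).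
Proof. split. apply open_False. eapply open_ext; [|apply open_True]. intro; simpl; tauto. Qed.

Lemma clopen_compl P : clopen P -> clopen (fun y => ~ P y).
Proof.
  intros [H1 H2]; split; auto. eapply open_ext; [|exact H1]. intro y; simpl. split; [tauto|apply NNPP].
Qed.

Lemma clopen_and P Q : clopen P -> clopen Q -> clopen (fun y => P y /\ Q y).
Proof.
  intros [H1 H2] [H3 H4]; split. apply open_and; auto.
  eapply open_ext; [|apply (open_or _ _ H2 H4)]. intro y; simpl. tauto.
Qed.

Lemma clopen_or P Q : clopen P -> clopen Q -> clopen (fun y => P y \/ Q y).
Proof.
  intros [H1 H2] [H3 H4]; split. apply open_or; auto.
  eapply open_ext; [|apply (open_and _ _ H2 H4)]. intro y; simpl. tauto.
Qed.

Lemma clopen_list {A : Type} (l : list A) (P : A -> X -> Prop) :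
  (forall o, clopen (P o)) -> clopen (fun y => forall o, In o l -> P o y).
Proof.
  intros HP. induction l as [|a l IH].
  - eapply clopen_ext; [|apply clopen_True]. intro y; simpl; tauto.
  - eapply clopen_ext; [|apply (clopen_and _ _ (HP a) IH)]. intro y; simpl.
    split. intros [H1 H2] o [<-|Ho]; auto. intros H; split; auto.
Qed.

Lemma clopen_imp (Q : Prop) P : clopen P -> clopen (fun y => Q -> P y).
Proof.
  intros HP. destruct (classic Q) as [q|nq].
  - eapply clopen_ext; [|exact HP]. intro; simpl; tauto.
  - eapply clopen_ext; [|apply clopen_True]. intro; simpl; tauto.
Qed.

Hypothesis Hc : is_compact d.

Lemma clopen_inside x (W : X -> Prop) : is_open d W ->
  (forall z, ~ W z -> exists C, clopen C /\ C x /\ ~ C z) ->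
  exists C, clopen C /\ C x /\ forall y, C y -> W y.
Proof.
  intros HW Hz.
  assert (Hf : forall z, exists C, clopen C /\ (~ W z -> C x /\ ~ C z)).
  { intro z. destruct (classic (W z)) as [w|nw].
    - exists (fun _ => True). split. apply clopen_True. tauto.
    - destruct (Hz z nw) as [C HC]. exists C; tauto. }
  apply choice_fun in Hf as [Cf HCf].
  set (U := fun (o : option X) (y : X) => match o with None => W y | Some z => ~ W z /\ ~ Cf z y end).
  destruct (Hc (option X) U) as [l Hl].
  - intros [z|]; simpl; auto.
    destruct (classic (W z)) as [w|nw].
    + eapply open_ext; [|apply open_False]. intro; simpl; tauto.
    + eapply open_ext; [|apply (proj2 (proj1 (HCf z)))]. intro; simpl; tauto.
  - intro y. destruct (classic (W y)) as [w|nw].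
    + exists None; simpl; auto.
    + exists (Some y); simpl. split; auto. apply (proj2 (HCf y) nw).
  - exists (fun y => forall o, In o l -> match o with None => True | Some z => ~ W z -> Cf z y end).
    split; [|split].
    + apply clopen_list. intros [z|].
      * apply clopen_imp. apply (HCf z).
      * apply clopen_True.
    + intros [z|] _; auto. intro nw. apply (proj2 (HCf z) nw).
    + intros y Hy. destruct (Hl y) as [o [Ho Uo]]. specialize (Hy o Ho).
      destruct o as [z|]; simpl in *; auto. destruct Uo as [nw nc]. exfalso; auto.
Qed.

Lemma sep_closed (A B : X -> Prop) :
  is_open d (fun z => ~ A z) -> is_open d (fun z => ~ B z) -> (forall z, A z -> B z -> False) ->
  exists U' V', is_open d U' /\ is_open d V' /\ (forall z, A z -> U' z) /\ (forall z, B z -> V' z) /\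
    (forall z, U' z -> V' z -> False).
Proof.
  intros HA HB Hd.
  assert (Ha : forall a, exists r, 0 < r /\ (A a -> forall y, d a y < r -> ~ B y)).
  { intro a. destruct (classic (A a)) as [Aa|nA].
    - destruct (HB a (fun Ba => Hd a Aa Ba)) as [r [Hr H]]. exists r; auto.
    - exists 1; split; [lra|tauto]. }
  assert (Hb : forall b, exists r, 0 < r /\ (B b -> forall y, d b y < r -> ~ A y)).
  { intro b. destruct (classic (B b)) as [Bb|nB].
    - destruct (HA b (fun Ab => Hd b Ab Bb)) as [r [Hr H]]. exists r; auto.
    - exists 1; split; [lra|tauto]. }
  apply choice_fun in Ha as [ra Hra]. apply choice_fun in Hb as [rb Hrb].
  exists (fun y => exists a, A a /\ d a y < ra a / 2), (fun y => exists b, B b /\ d b y < rb b / 2).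
  split; [|split; [|split; [|split]]].
  - intros y [a [Aa Hy]]. exists (ra a / 2 - d a y). split. lra.
    intros z Hz. exists a; split; auto. pose proof (d_tri a y z). lra.
  - intros y [a [Aa Hy]]. exists (rb a / 2 - d a y). split. lra.
    intros z Hz. exists a; split; auto. pose proof (d_tri a y z). lra.
  - intros z Az. exists z; split; auto. rewrite d_refl. pose proof (proj1 (Hra z)); lra.
  - intros z Bz. exists z; split; auto. rewrite d_refl. pose proof (proj1 (Hrb z)); lra.
  - intros z [a [Aa Ha1]] [b [Bb Hb1]].
    pose proof (d_tri a z b). rewrite (d_sym b z) in Hb1.
    destruct (Rle_dec (rb b) (ra a)).
    + apply (proj2 (Hra a) Aa b); auto. lra.
    + apply (proj2 (Hrb b) Bb a); auto. rewrite d_sym. lra.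
Qed.

Lemma clopen_piece (C P1 P2 : X -> Prop) : clopen C -> is_open d P1 -> is_open d P2 ->
  (forall z, C z -> P1 z \/ P2 z) -> (forall z, P1 z -> P2 z -> False) ->
  clopen (fun z => C z /\ P1 z).
Proof.
  intros [HC1 HC2] H1 H2 Hcov Hd. split. apply open_and; auto.
  intros z Hz. destruct (classic (C z)) as [Cz|nC].
  - assert (P2 z) by (destruct (Hcov z Cz); tauto).
    destruct (H2 z H) as [r [Hr Hb]]. exists r; split; auto.
    intros y Hy [_ P1y]. apply (Hd y); auto.
  - destruct (HC2 z nC) as [r [Hr Hb]]. exists r; split; auto.
    intros y Hy [Cy _]. apply (Hb y Hy Cy).
Qed.

Hypothesis Ht : totally_disconnected d.

Lemma sep_clopen x y : x <> y -> exists C, clopen C /\ C x /\ ~ C y.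
Proof.
  intros Hxy. apply NNPP; intro H. apply Hxy.
  set (Q := fun z => forall C, clopen C -> C x -> C z).
  assert (notQ : forall z, ~ Q z -> exists C, clopen C /\ C x /\ ~ C z).
  { intros z nQ. apply NNPP; intro H'. apply nQ. intros C HC Cx. apply NNPP; intro. apply H'.
    exists C; auto. }
  assert (Qy : Q y).
  { intros C HC Cx. apply NNPP; intro. apply H; exists C; auto. }
  apply (Ht Q); auto; [| intros C HC Cx; auto].
  intros U V HU HV Hcov Hdisj.
  assert (Hcl : forall P Vo, is_open d Vo -> (forall z, Q z -> ~ P z -> Vo z) ->
            (forall z, Q z -> P z -> Vo z -> False) -> is_open d (fun z => ~ (Q z /\ P z))).
  { intros P Vo HVo H1 H2 z Hz. destruct (classic (Q z)) as [Qz|nQz].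
    - assert (Vo z) by (apply H1; tauto). destruct (HVo z H0) as [r [Hr Hb]].
      exists r; split; auto. intros w Hw [Qw Pw]. apply (H2 w Qw Pw (Hb w Hw)).
    - destruct (notQ z nQz) as [C [[HC1 HC2] [Cx nCz]]]. destruct (HC2 z nCz) as [r [Hr Hb]].
      exists r; split; auto. intros w Hw [Qw _]. apply (Hb w Hw (Qw C (conj HC1 HC2) Cx)). }
  destruct (sep_closed (fun z => Q z /\ U z) (fun z => Q z /\ V z)) as [U' [V' [HU' [HV' [HAU [HBV Hd']]]]]].
  - apply (Hcl U V HV). intros z Qz nU. destruct (Hcov z Qz); tauto.
    intros z Qz Uz Vz. exact (Hdisj z Qz Uz Vz).
  - apply (Hcl V U HU). intros z Qz nV. destruct (Hcov z Qz); tauto.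
    intros z Qz Vz Uz. exact (Hdisj z Qz Uz Vz).
  - intros z [Qz Uz] [_ Vz]. exact (Hdisj z Qz Uz Vz).
  - destruct (clopen_inside x (fun z => U' z \/ V' z)) as [C [HC [Cx HCW]]].
    + apply open_or; auto.
    + intros z Hz. apply notQ. intro Qz. apply Hz. destruct (Hcov z Qz); [left|right]; auto.
    + destruct (classic (U' x)) as [Ux|nUx].
      * left. intros q Qq. assert (HD : clopen (fun z => C z /\ U' z)) by
          (apply (clopen_piece C U' V'); auto).
        destruct (Qq _ HD (conj Cx Ux)) as [_ Uq].
        destruct (Hcov q Qq) as [|Vq]; auto. exfalso; apply (Hd' q); auto.
      * right. intros q Qq. assert (HD : clopen (fun z => C z /\ V' z)) by
          (apply (clopen_piece C V' U'); auto; [intros z Cz; destruct (HCW z Cz); tauto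
                                              | intros z a b; apply (Hd' z); auto]).
        assert (V' x) by (destruct (HCW x Cx); tauto).
        destruct (Qq _ HD (conj Cx H0)) as [_ Vq].
        destruct (Hcov q Qq) as [Uq|]; auto. exfalso; apply (Hd' q); auto.
Qed.

Lemma clopen_ball x r : 0 < r -> exists C, clopen C /\ C x /\ forall y, C y -> d x y < r.
Proof.
  intros Hr. apply clopen_inside. apply open_ball.
  intros z Hz. apply sep_clopen. intros ->. apply Hz. rewrite d_refl. auto.
Qed.

Lemma nested (F : nat -> X -> Prop) :
  (forall n, is_open d (fun z => ~ F n z)) -> (forall n z, F (S n) z -> F n z) ->
  (forall n, exists z, F n z) -> exists z, forall n, F n z.
Proof.
  intros Hcl Hnest Hne. apply NNPP; intro H.
  assert (Hmono : forall n m, (n <= m)%nat -> forall z, F m z -> F n z).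
  { intros n m Hnm. induction Hnm; auto. }
  destruct (Hc nat (fun n z => ~ F n z)) as [l Hl]; auto.
  - intro z. apply NNPP; intro H'. apply H. exists z. intro n. apply NNPP; intro. apply H'; eauto.
  - set (M := fold_right max 0%nat l).
    assert (HM : forall n, In n l -> (n <= M)%nat).
    { unfold M; clear. induction l as [|a l IH]; simpl; [tauto|]. intros n [<-|Hn]; [lia|].
      specialize (IH n Hn); lia. }
    destruct (Hne M) as [z Hz]. destruct (Hl z) as [n [Hn nF]]. apply nF. apply (Hmono n M); auto.
Qed.


Definition small (C : X -> Prop) (r : R) := forall x y, C x -> C y -> d x y < r.

Definition good (S : X -> Prop) (c : X -> nat) (k : nat) (r : R) :=
  (forall x, S x -> (c x < k)%nat) /\
  (forall j, (j < k)%nat -> exists x, S x /\ c x = j) /\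
  (forall x, S x -> exists e, 0 < e /\ forall y, d x y < e -> S y /\ c y = c x) /\
  (forall x y, S x -> S y -> c x = c y -> d x y < r).

Lemma good_ext S S' c k r : (forall y, S y <-> S' y) -> good S c k r -> good S' c k r.
Proof.
  intros E [H1 [H2 [H3 H4]]]. split; [|split; [|split]].
  - intros x Hx; apply H1, E, Hx.
  - intros j Hj. destruct (H2 j Hj) as [x [Sx Hx]]. exists x; split; auto; apply E; auto.
  - intros x Hx. destruct (H3 x (proj2 (E x) Hx)) as [e [He Hb]]. exists e; split; auto.
    intros y Hy. destruct (Hb y Hy); split; auto. apply E; auto.
  - intros x y Hx Hy. apply H4; apply E; auto.
Qed.

Lemma clopen_list_ex (Cs : list (X -> Prop)) :
  (forall C, In C Cs -> clopen C) -> clopen (fun y => exists C, In C Cs /\ C y).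
Proof.
  induction Cs as [|C Cs IH]; intros H.
  - eapply clopen_ext; [|apply clopen_False]. intro y; simpl. split; [tauto|]. intros [C [[] _]].
  - eapply clopen_ext; [|apply (clopen_or C _ (H C (or_introl eq_refl)) (IH (fun C' HC' => H C' (or_intror HC'))))].
    intro y; simpl. split.
    + intros [Cy|[C' [HC' Cy]]]; eauto.
    + intros [C' [[<-|HC'] Cy]]; eauto.
Qed.

Lemma S1_list (A : X -> Prop) r (Cs : list (X -> Prop)) : clopen A ->
  (forall C, In C Cs -> clopen C /\ small C r) ->
  exists k c, good (fun y => A y /\ exists C, In C Cs /\ C y) c k r.
Proof.
  intros HA. induction Cs as [|C Cs IH]; intros HCs.
  - exists 0%nat, (fun _ => 0%nat). split; [|split; [|split]].
    + intros x [_ [C [[] _]]].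
    + intros j Hj; lia.
    + intros x [_ [C [[] _]]].
    + intros x y [_ [C [[] _]]].
  - destruct IH as [k [c Hg]]. { intros C' HC'; apply HCs; right; auto. }
    set (S' := fun y => A y /\ exists C', In C' Cs /\ C' y) in Hg.
    assert (HS' : clopen S').
    { apply clopen_and; auto. apply clopen_list_ex. intros C' HC'; apply HCs; right; auto. }
    destruct (HCs C (or_introl eq_refl)) as [HC HsC].
    assert (HE : forall y, (A y /\ exists C', In C' (C :: Cs) /\ C' y) <-> (S' y \/ (A y /\ C y /\ ~ S' y))).
    { intro y. unfold S'. split.
      - intros [Ay [C' [[<-|HC'] Cy]]].
        + destruct (classic (exists C', In C' Cs /\ C' y)); [left|right]; tauto.
        + left; eauto.
      - intros [[Ay [C' [HC' Cy]]]|[Ay [Cy _]]].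
        + split; auto. exists C'; simpl; auto.
        + split; auto. exists C; simpl; auto. }
    destruct (classic (exists y, A y /\ C y /\ ~ S' y)) as [[y0 Hy0]|Hno].
    + exists (S k), (fun y => if excluded_middle_informative (S' y) then c y else k).
      apply (good_ext (fun y => S' y \/ (A y /\ C y /\ ~ S' y))); [intro; rewrite HE; tauto|].
      destruct Hg as [H1 [H2 [H3 H4]]].
      split; [|split; [|split]].
      * intros x Hx. destruct (excluded_middle_informative (S' x)); [specialize (H1 x s)|]; lia.
      * intros j Hj. destruct (Nat.eq_dec j k) as [->|Hjk].
        -- exists y0. split; [tauto|]. destruct (excluded_middle_informative (S' y0)); tauto.
        -- destruct (H2 j ltac:(lia)) as [x [Sx Hx]]. exists x. split; [tauto|].
           destruct (excluded_middle_informative (S' x)); tauto.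
      * intros x Hx. destruct (excluded_middle_informative (S' x)) as [Sx|nSx].
        -- destruct (H3 x Sx) as [e [He Hb]]. exists e; split; auto. intros y Hy.
           destruct (Hb y Hy) as [Sy Hcy]. split; auto.
           destruct (excluded_middle_informative (S' y)); tauto.
        -- assert (HQ : is_open d (fun y => A y /\ C y /\ ~ S' y)).
           { apply open_and; [apply HA|apply open_and; [apply HC|apply HS']]. }
           destruct Hx as [|Hx]; [tauto|].
           destruct (HQ x Hx) as [e [He Hb]]. exists e; split; auto. intros y Hy.
           specialize (Hb y Hy). split; auto.
           destruct (excluded_middle_informative (S' y)); tauto.
      * intros x y Hx Hy.
        destruct (excluded_middle_informative (S' x)) as [Sx|nSx];
        destruct (excluded_middle_informative (S' y)) as [Sy|nSy]; intro Heq.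
        -- apply H4; auto.
        -- specialize (H1 x Sx); lia.
        -- specialize (H1 y Sy); lia.
        -- apply HsC; tauto.
    + exists k, c. apply (good_ext S'); auto.
      intro y. rewrite HE. split; [tauto|]. intros [|H]; auto. exfalso; apply Hno; eauto.
Qed.

Lemma S1 (A : X -> Prop) r : clopen A -> 0 < r -> exists k c, good A c k r.
Proof.
  intros HA Hr.
  assert (Hf : forall x, exists C, clopen C /\ C x /\ small C r).
  { intro x. destruct (clopen_ball x (r/2)) as [C [HC [Cx Hs]]]. lra.
    exists C; split; [|split]; auto. intros y z Cy Cz. pose proof (Hs y Cy); pose proof (Hs z Cz).
    pose proof (d_tri y x z). rewrite (d_sym y x) in H1. lra. }
  apply choice_fun in Hf as [Cf HCf].
  destruct (Hc (option X) (fun o y => match o with None => ~ A y | Some x => Cf x y end)) as [l Hl].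
  - intros [x|]. apply (HCf x). apply HA.
  - intro y. destruct (classic (A y)). exists (Some y). apply HCf. exists None; auto.
  - set (Cs := map (fun o => match o with None => fun _ => False | Some x => Cf x end) l).
    destruct (S1_list A r Cs HA) as [k [c Hg]].
    + intros C HC. unfold Cs in HC. apply in_map_iff in HC as [[x|] [<- _]].
      * split; apply HCf.
      * split. apply clopen_False. intros y z [].
    + exists k, c. revert Hg. apply good_ext. intro y. split; [tauto|]. intro Ay. split; auto.
      destruct (Hl y) as [[x|] [Ho Hy]].
      * exists (Cf x). split; auto. unfold Cs. apply in_map_iff. exists (Some x); auto.
      * contradiction.
Qed.


Hypothesis Hp : no_isolated_points d.

Lemma S2 A c k r : good A c k r -> (1 <= k)%nat -> exists c', good A c' (S k) r.
Proof.
  intros [H1 [H2 [H3 H4]]] Hk.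
  destruct (H2 0%nat Hk) as [x0 [Ax0 cx0]].
  destruct (H3 x0 Ax0) as [e [He Hb]].
  destruct (Hp x0 e He) as [y0 [Hy0 Hdy]].
  destruct (Hb y0 Hdy) as [Ay0 cy0].
  destruct (sep_clopen x0 y0) as [C [[HC1 HC2] [Cx0 nCy0]]]. auto.
  exists (fun y => if excluded_middle_informative (C y /\ c y = 0%nat) then k else c y).
  split; [|split; [|split]].
  - intros x Hx. specialize (H1 x Hx). destruct (excluded_middle_informative _); lia.
  - intros j Hj. destruct (Nat.eq_dec j k) as [->|Hjk].
    + exists x0. split; auto. destruct (excluded_middle_informative _); auto. exfalso; tauto.
    + destruct (Nat.eq_dec j 0) as [->|Hj0].
      * exists y0. split; auto. destruct (excluded_middle_informative _); [tauto|]. congruence.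
      * destruct (H2 j ltac:(lia)) as [x [Ax cx]]. exists x. split; auto.
        destruct (excluded_middle_informative _); [lia|auto].
  - intros x Ax. destruct (H3 x Ax) as [e1 [He1 Hb1]].
    assert (exists e2, 0 < e2 /\ forall y, d x y < e2 -> (C y <-> C x)) as [e2 [He2 Hb2]].
    { destruct (classic (C x)) as [Cx|nCx].
      - destruct (HC1 x Cx) as [e2 [He2 Hb2]]. exists e2; split; auto. intros y Hy; split; auto.
      - destruct (HC2 x nCx) as [e2 [He2 Hb2]]. exists e2; split; auto. intros y Hy; split; auto.
        intro; exfalso; apply (Hb2 y Hy); auto. intro; contradiction. }
    exists (Rmin e1 e2). split. apply Rmin_pos; auto.
    intros y Hy. pose proof (Rmin_l e1 e2); pose proof (Rmin_r e1 e2).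
    destruct (Hb1 y ltac:(lra)) as [Ay cy]. split; auto.
    specialize (Hb2 y ltac:(lra)). rewrite cy.
    destruct (excluded_middle_informative (C y /\ c x = 0%nat));
    destruct (excluded_middle_informative (C x /\ c x = 0%nat)); tauto.
  - intros x y Ax Ay. pose proof (H1 x Ax); pose proof (H1 y Ay).
    destruct (excluded_middle_informative (C x /\ c x = 0%nat));
    destruct (excluded_middle_informative (C y /\ c y = 0%nat)); intro E.
    + apply H4; auto; lia.
    + lia.
    + lia.
    + apply H4; auto.
Qed.

Lemma S2_iter A c k r : good A c k r -> (1 <= k)%nat -> forall m, (k <= m)%nat -> exists c', good A c' m r.
Proof.
  intros Hg Hk m Hkm. induction Hkm.
  - eauto.
  - destruct IHHkm as [c' Hc']. apply (S2 A c'); auto. lia.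
Qed.

Definition sw (i j n : nat) : nat :=
  if Nat.eq_dec n i then j else if Nat.eq_dec n j then i else n.

Lemma sw_invol i j n : sw i j (sw i j n) = n.
Proof. unfold sw. repeat (destruct Nat.eq_dec; subst; try lia; auto). Qed.

Lemma sw_lt i j n k : (i < k)%nat -> (j < k)%nat -> (n < k)%nat -> (sw i j n < k)%nat.
Proof. unfold sw. repeat destruct Nat.eq_dec; lia. Qed.

Lemma S3 A c k r p : good A c k r -> A p -> good A (fun y => sw 0 (c p) (c y)) k r /\ sw 0 (c p) (c p) = 0%nat.
Proof.
  intros [H1 [H2 [H3 H4]]] Ap. pose proof (H1 p Ap). split; [split; [|split; [|split]]|].
  - intros x Ax. apply sw_lt; auto; lia.
  - intros j Hj. destruct (H2 (sw 0 (c p) j)) as [x [Ax cx]]. apply sw_lt; auto; lia.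
    exists x; split; auto. rewrite cx. apply sw_invol.
  - intros x Ax. destruct (H3 x Ax) as [e [He Hb]]. exists e; split; auto.
    intros y Hy. destruct (Hb y Hy) as [Ay E]. rewrite E; auto.
  - intros x y Ax Ay E. apply H4; auto.
    rewrite <- (sw_invol 0 (c p) (c x)), E. apply sw_invol.
  - unfold sw. repeat destruct Nat.eq_dec; lia.
Qed.

Lemma split_exists (A B : X -> Prop) a b r : clopen A -> clopen B -> 0 < r ->
  (exists x, A x) -> (exists y, B y) -> (A a <-> B b) ->
  exists k cA cB, good A cA k r /\ good B cB k r /\ (A a -> cA a = 0%nat /\ cB b = 0%nat).
Proof.
  intros HA HB Hr [x Ax] [y By] Hab.
  destruct (S1 A r HA Hr) as [kA [cA HgA]].
  destruct (S1 B r HB Hr) as [kB [cB HgB]].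
  assert (1 <= kA)%nat by (pose proof (proj1 HgA x Ax); lia).
  assert (1 <= kB)%nat by (pose proof (proj1 HgB y By); lia).
  destruct (S2_iter A cA kA r HgA H (max kA kB)) as [cA' HA']. lia.
  destruct (S2_iter B cB kB r HgB H0 (max kA kB)) as [cB' HB']. lia.
  destruct (classic (A a)) as [Aa|nAa].
  - assert (Bb : B b) by tauto.
    destruct (S3 A cA' _ r a HA' Aa) as [G1 E1].
    destruct (S3 B cB' _ r b HB' Bb) as [G2 E2].
    exists (max kA kB), (fun y => sw 0 (cA' a) (cA' y)), (fun y => sw 0 (cB' b) (cB' y)). auto.
  - exists (max kA kB), cA', cB'. split; auto. split; auto. tauto.
Qed.

End S.
Definition rr (n : nat) : R := / INR (S n).
Lemma rr_pos n : 0 < rr n.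
Proof. unfold rr. apply Rinv_0_lt_compat, lt_0_INR; lia. Qed.
Lemma rr_small e : 0 < e -> exists n, rr n < e.
Proof.
  intros He. destruct (archimed_cor1 e He) as [N [HN HN0]]. exists (pred N).
  unfold rr. replace (S (pred N)) with N by lia. auto.
Qed.

Section T.
Variable X : Type.
Variable d : X -> X -> R.
Hypothesis Hm : is_metric d.
Hypothesis Hc : is_compact d.
Hypothesis Ht : totally_disconnected d.
Hypothesis Hp : no_isolated_points d.
Variables U V : X -> Prop.
Variables a b : X.
Hypothesis HU : clopen X d U.
Hypothesis HV : clopen X d V.
Hypothesis Ua : U a.
Hypothesis Vb : V b.

Definition pr {T : Type} (s : bool) (p : T * T) : T := if s then fst p else snd p.
Definition pt (s : bool) : X := if s then a else b.

Definition splitfun (A B : X -> Prop) (n : nat) : (X -> nat) * (X -> nat) :=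
  epsilon (inhabits ((fun _ => 0%nat), (fun _ => 0%nat)))
    (fun p => exists k, good X d A (fst p) k (rr n) /\ good X d B (snd p) k (rr n) /\
                        (A a -> fst p a = 0%nat /\ snd p b = 0%nat)).

Fixpoint node (l : list nat) : (X -> Prop) * (X -> Prop) :=
  match l with
  | nil => (U, V)
  | j :: l' => let p := node l' in let s := splitfun (fst p) (snd p) (length l') in
      ((fun x => fst p x /\ fst s x = j), (fun y => snd p y /\ snd s y = j))
  end.

Definition sp (l : list nat) := splitfun (fst (node l)) (snd (node l)) (length l).

Lemma node_cons s j l x : pr s (node (j :: l)) x <-> pr s (node l) x /\ pr s (sp l) x = j.
Proof. destruct s; simpl; tauto. Qed.

Definition INV (l : list nat) :=
  (forall s, clopen X d (pr s (node l))) /\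
  ((exists x, fst (node l) x) <-> (exists y, snd (node l) y)) /\
  (forall s, pr s (node l) (pt s) <-> pr true (node l) a).

Lemma sp_spec l : INV l -> (exists x, fst (node l) x) ->
  exists k, (forall s, good X d (pr s (node l)) (pr s (sp l)) k (rr (length l))) /\
            (fst (node l) a -> forall s, pr s (sp l) (pt s) = 0%nat).
Proof.
  intros [Hcl [Hne Hab]] Hx.
  assert (Hex : exists p : (X -> nat) * (X -> nat), exists k, good X d (fst (node l)) (fst p) k (rr (length l)) /\
      good X d (snd (node l)) (snd p) k (rr (length l)) /\
      (fst (node l) a -> fst p a = 0%nat /\ snd p b = 0%nat)).
  { destruct (split_exists X d Hm Hc Ht Hp (fst (node l)) (snd (node l)) a b (rr (length l)))
      as [k [cA [cB H]]]; auto.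
    - apply (Hcl true).
    - apply (Hcl false).
    - apply rr_pos.
    - apply Hne; auto.
    - pose proof (Hab false). simpl in H. tauto.
    - exists (cA, cB), k. exact H. }
  pose proof (epsilon_spec (inhabits ((fun _ : X => 0%nat), (fun _ : X => 0%nat))) _ Hex) as [k [G1 [G2 G3]]].
  exists k. unfold sp, splitfun. split.
  - intros []; auto.
  - intros Ha []; simpl; apply G3; auto.
Qed.

Lemma INV_all l : INV l.
Proof.
  induction l as [|j l IH].
  - split; [|split].
    + intros []; auto.
    + split; intros _; eauto.
    + intros []; simpl; tauto.
  - destruct (classic (exists x, fst (node l) x)) as [Hx|Hnx].
    + destruct (sp_spec l IH Hx) as [k [Hg Ha]].
      destruct IH as [Hcl [Hne Hab]].
      split; [|split].
      * intro s. destruct (Hg s) as [H1 [H2 [H3 H4]]]. destruct (Hcl s) as [Ho Hco].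
        eapply (clopen_ext X d). intro y. symmetry. apply node_cons. split.
        -- intros x [Ax cx]. destruct (H3 x Ax) as [e [He Hb]]. exists e; split; auto.
           intros y Hy. destruct (Hb y Hy); split; auto. congruence.
        -- intros x Hx'. destruct (classic (pr s (node l) x)) as [Ax|nAx].
           ++ destruct (H3 x Ax) as [e [He Hb]]. exists e; split; auto.
              intros y Hy [Ay cy]. destruct (Hb y Hy). apply Hx'. split; auto. congruence.
           ++ destruct (Hco x nAx) as [e [He Hb]]. exists e; split; auto.
              intros y Hy [Ay cy]. apply (Hb y Hy Ay).
      * destruct (Nat.lt_ge_cases j k) as [Hjk|Hjk].
        -- split; intros _.
           ++ destruct (proj1 (proj2 (Hg false)) j Hjk) as [y [By cy]]. exists y. apply (node_cons false j l y); split; auto.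
           ++ destruct (proj1 (proj2 (Hg true)) j Hjk) as [y [By cy]]. exists y. apply (node_cons true j l y); split; auto.
        -- split; intros [x Hx'].
           ++ exfalso. apply (node_cons true) in Hx'. destruct Hx' as [Ax cx]. pose proof (proj1 (Hg true) x Ax). unfold pr, sp in *. lia.
           ++ exfalso. apply (node_cons false) in Hx'. destruct Hx' as [Ax cx]. pose proof (proj1 (Hg false) x Ax). unfold pr, sp in *. lia.
      * intro s. rewrite !node_cons. rewrite (Hab s).
        destruct (classic (pr true (node l) a)) as [Aa|nAa].
        -- pose proof (Ha Aa s) as E1. pose proof (Ha Aa true) as E2. simpl in E2.
           simpl. rewrite E1, E2. tauto.
        -- tauto.
    + assert (Hny : ~ exists y, snd (node l) y) by (destruct IH as [_ [Hne _]]; tauto).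
      assert (Hemp : forall s x, ~ pr s (node (j :: l)) x).
      { intros s x Hx'. apply node_cons in Hx'. destruct s; simpl in Hx'; [apply Hnx|apply Hny]; exists x; tauto. }
      split; [|split].
      * intro s. eapply (clopen_ext X d); [|apply (clopen_False X d)]. intro y. split; [tauto|]. apply Hemp.
      * split; intros [x Hx']; exfalso; [apply (Hemp true x)|apply (Hemp false x)]; auto.
      * intro s. split; intro H; exfalso; [apply (Hemp s (pt s))|apply (Hemp true a)]; auto.
Qed.

Lemma node_diam s j l x y : pr s (node (j :: l)) x -> pr s (node (j :: l)) y -> d x y < rr (length l).
Proof.
  intros Hx Hy. apply node_cons in Hx as [Ax cx]. apply node_cons in Hy as [Ay cy].
  assert (Hne : exists x, fst (node l) x).
  { destruct s; [exists x; auto|]. apply (INV_all l). exists x; auto. }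
  destruct (sp_spec l (INV_all l) Hne) as [k [Hg _]].
  apply (proj2 (proj2 (proj2 (Hg s)))); auto. congruence.
Qed.

Lemma node_sub s l x : pr s (node l) x -> pr s (node nil) x.
Proof.
  induction l as [|j l IH]; auto. intro H. apply node_cons in H. apply IH; tauto.
Qed.

Fixpoint addr (s : bool) (x : X) (n : nat) : list nat :=
  match n with
  | O => nil
  | S n => pr s (sp (addr s x n)) x :: addr s x n
  end.

Lemma addr_len s x n : length (addr s x n) = n.
Proof. induction n; simpl; auto. Qed.

Lemma addr_in s x : pr s (node nil) x -> forall n, pr s (node (addr s x n)) x.
Proof.
  intros H0 n. induction n; auto. simpl addr. apply node_cons. auto.
Qed.

Lemma addr_unique s l x : pr s (node l) x -> addr s x (length l) = l.
Proof.
  induction l as [|j l IH]; auto. intro H. apply node_cons in H as [H1 H2].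
  simpl. rewrite (IH H1). congruence.
Qed.

Definition fm (s : bool) (x : X) : X :=
  epsilon (inhabits x) (fun y => forall n, pr (negb s) (node (addr s x n)) y).

Lemma fm_spec s x : pr s (node nil) x -> forall n, pr (negb s) (node (addr s x n)) (fm s x).
Proof.
  intros H0. unfold fm. apply epsilon_spec.
  apply (nested X d Hc (fun n => pr (negb s) (node (addr s x n)))).
  - intro n. apply (proj2 (proj1 (INV_all (addr s x n)) (negb s))).
  - intros n z Hz. simpl addr in Hz. apply node_cons in Hz; tauto.
  - intro n. pose proof (addr_in s x H0 n) as Hx. destruct (INV_all (addr s x n)) as [_ [Hne _]].
    destruct s; simpl in *; [apply Hne|apply Hne]; exists x; auto.
Qed.

Lemma uniq_pt s l x1 x2 : (forall n, pr s (node (addr s l n)) x1) -> (forall n, pr s (node (addr s l n)) x2) -> x1 = x2.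
Proof.
  intros H1 H2. apply (d_eq X d Hm). destruct (d_nonneg X d Hm x1 x2) as [Hlt|]; auto.
  destruct (rr_small _ Hlt) as [n Hn]. exfalso.
  pose proof (node_diam s _ _ x1 x2 (H1 (S n)) (H2 (S n))). rewrite addr_len in H. lra.
Qed.


Lemma fm_in s x : pr s (node nil) x -> pr (negb s) (node nil) (fm s x).
Proof. intro H. exact (fm_spec s x H 0). Qed.

Lemma addr_fm s x : pr s (node nil) x -> forall n, addr (negb s) (fm s x) n = addr s x n.
Proof.
  intros H n. pose proof (addr_unique (negb s) (addr s x n) (fm s x) (fm_spec s x H n)).
  rewrite addr_len in H0. exact H0.
Qed.

Lemma fm_inv s x : pr s (node nil) x -> fm (negb s) (fm s x) = x.
Proof.
  intro H. pose proof (fm_spec (negb s) (fm s x) (fm_in s x H)) as H1.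
  rewrite Bool.negb_involutive in H1.
  apply (uniq_pt s x); [|apply addr_in; auto].
  intro n. rewrite <- (addr_fm s x H n). apply H1.
Qed.

Lemma pt_in s : pr s (node nil) (pt s).
Proof. destruct s; simpl; auto. Qed.

Lemma fm_pt s : fm s (pt s) = pt (negb s).
Proof.
  assert (Hin : forall n, pr (negb s) (node (addr s (pt s) n)) (pt (negb s))).
  { intro n. pose proof (addr_in s (pt s) (pt_in s) n) as H.
    destruct (INV_all (addr s (pt s) n)) as [_ [_ Hab]].
    apply Hab. apply Hab in H. auto. }
  assert (HA : forall n, addr (negb s) (pt (negb s)) n = addr s (pt s) n).
  { intro n. pose proof (addr_unique _ _ _ (Hin n)). rewrite addr_len in H. auto. }
  apply (uniq_pt (negb s) (pt (negb s))).
  - intro n. rewrite HA. apply fm_spec, pt_in.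
  - intro n. rewrite HA. apply Hin.
Qed.

Lemma fm_cont s x : pr s (node nil) x -> forall e, 0 < e -> exists de, 0 < de /\
  forall y, d x y < de -> pr s (node nil) y /\ d (fm s x) (fm s y) < e.
Proof.
  intros H e He. destruct (rr_small e He) as [n Hn].
  set (L := addr s x (S n)).
  destruct (proj1 (INV_all L) s) as [Ho _].
  destruct (Ho x (addr_in s x H (S n))) as [de [Hde Hb]].
  exists de; split; auto. intros y Hy. specialize (Hb y Hy).
  split. eapply node_sub; eauto.
  assert (E : addr s y (S n) = L).
  { pose proof (addr_unique s L y Hb). unfold L in *. rewrite addr_len in H0. auto. }
  pose proof (fm_spec s x H (S n)) as F1. pose proof (fm_spec s y (node_sub _ _ _ Hb) (S n)) as F2.
  rewrite E in F2. fold L in F1. unfold L in F1, F2. simpl addr in F1, F2.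
  pose proof (node_diam _ _ _ _ _ F1 F2). rewrite addr_len in H0. lra.
Qed.

End T.

Lemma lemmaE (X : Type) (d : X -> X -> R) : is_metric d -> is_compact d -> totally_disconnected d ->
  no_isolated_points d -> forall U V a b, clopen X d U -> clopen X d V -> U a -> V b ->
  exists f g : X -> X, (forall x, U x -> V (f x)) /\ (forall y, V y -> U (g y)) /\
    (forall x, U x -> g (f x) = x) /\ (forall y, V y -> f (g y) = y) /\ f a = b /\
    (forall x, U x -> forall e, 0 < e -> exists de, 0 < de /\ forall y, d x y < de -> U y /\ d (f x) (f y) < e) /\
    (forall x, V x -> forall e, 0 < e -> exists de, 0 < de /\ forall y, d x y < de -> V y /\ d (g x) (g y) < e).
Proof.
  intros Hm Hc Ht Hp U V a b HU HV Ua Vb.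
  exists (fm X d U V a b true), (fm X d U V a b false).
  split; [|split; [|split; [|split; [|split; [|split]]]]].
  - intros x Hx. apply (fm_in X d Hm Hc Ht Hp U V a b HU HV Ua Vb true x Hx).
  - intros x Hx. apply (fm_in X d Hm Hc Ht Hp U V a b HU HV Ua Vb false x Hx).
  - intros x Hx. apply (fm_inv X d Hm Hc Ht Hp U V a b HU HV Ua Vb true x Hx).
  - intros x Hx. apply (fm_inv X d Hm Hc Ht Hp U V a b HU HV Ua Vb false x Hx).
  - apply (fm_pt X d Hm Hc Ht Hp U V a b HU HV Ua Vb true).
  - intros x Hx. apply (fm_cont X d Hm Hc Ht Hp U V a b HU HV Ua Vb true x Hx).
  - intros x Hx. apply (fm_cont X d Hm Hc Ht Hp U V a b HU HV Ua Vb false x Hx).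
Qed.
Lemma min_fin (n : nat) (f : nat -> R) : (forall i, (i < n)%nat -> 0 < f i) ->
  exists r, 0 < r /\ forall i, (i < n)%nat -> r <= f i.
Proof.
  induction n as [|n IH]; intros H.
  - exists 1; split; [lra|intros; lia].
  - destruct IH as [r [Hr Hb]]. intros i Hi; apply H; lia.
    exists (Rmin r (f n)). split. { apply Rmin_pos; auto. }
    intros i Hi. destruct (Nat.eq_dec i n) as [->|Hin]. apply Rmin_r.
    pose proof (Rmin_l r (f n)). pose proof (Hb i ltac:(lia)). lra.
Qed.

Lemma min_list {A : Type} (l : list A) (f : A -> R) : (forall x, 0 < f x) ->
  exists r, 0 < r /\ forall x, In x l -> r <= f x.
Proof.
  intros H. induction l as [|a l IH].
  - exists 1; split; [lra|intros x []].
  - destruct IH as [r [Hr Hb]]. exists (Rmin r (f a)). split. apply Rmin_pos; auto.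
    intros x [<-|Hx]. apply Rmin_r. pose proof (Rmin_l r (f a)). pose proof (Hb x Hx). lra.
Qed.

Section W.
Variable X : Type.
Variable d : X -> X -> R.
Hypothesis Hm : is_metric d.
Hypothesis Hc : is_compact d.
Hypothesis Ht : totally_disconnected d.
Hypothesis Hp : no_isolated_points d.

Lemma cont_id : continuous_map d (fun x => x).
Proof. intros x e He. exists e; split; auto. Qed.

Lemma cont_comp f g : continuous_map d f -> continuous_map d g -> continuous_map d (fun x => g (f x)).
Proof.
  intros Hf Hg x e He. destruct (Hg (f x) e He) as [e1 [He1 H1]].
  destruct (Hf x e1 He1) as [e2 [He2 H2]]. exists e2; split; auto.
Qed.

Variable c : X -> nat.
Hypothesis Hcl : forall x, exists e, 0 < e /\ forall y, d x y < e -> c y = c x.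

Lemma swap_lemma a b n (w : nat -> X) : a <> b -> c a = c b ->
  (forall i, (i < n)%nat -> w i <> a /\ w i <> b) ->
  exists h, is_homeo d h h /\ (forall x, c (h x) = c x) /\ h a = b /\ forall i, (i < n)%nat -> h (w i) = w i.
Proof.
  intros Hab Hcab Hw.
  destruct (min_fin n (fun i => Rmin (d a (w i)) (d b (w i)))) as [r0 [Hr0 Hb0]].
  { intros i Hi. destruct (Hw i Hi). apply Rmin_pos; apply (d_pos X d Hm); auto. }
  destruct (Hcl a) as [ea [Hea Hba]]. destruct (Hcl b) as [eb [Heb Hbb]].
  pose proof (d_pos X d Hm a b Hab) as Hdab.
  set (r := Rmin (Rmin r0 (d a b / 2)) (Rmin ea eb)).
  assert (Hr : 0 < r). { unfold r. repeat apply Rmin_pos; lra. }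
  assert (Hr1 : r <= r0 /\ r <= d a b / 2 /\ r <= ea /\ r <= eb).
  { unfold r. pose proof (Rmin_l (Rmin r0 (d a b / 2)) (Rmin ea eb)).
    pose proof (Rmin_r (Rmin r0 (d a b / 2)) (Rmin ea eb)).
    pose proof (Rmin_l r0 (d a b / 2)). pose proof (Rmin_r r0 (d a b / 2)).
    pose proof (Rmin_l ea eb). pose proof (Rmin_r ea eb). lra. }
  destruct (clopen_ball X d Hm Hc Ht a r Hr) as [U [HU [Ua HUb]]].
  destruct (clopen_ball X d Hm Hc Ht b r Hr) as [V [HV [Vb HVb]]].
  assert (Hdisj : forall y, U y -> V y -> False).
  { intros y Uy Vy. pose proof (HUb y Uy). pose proof (HVb y Vy). pose proof (d_tri X d Hm a y b).
    rewrite (d_sym X d Hm y b) in H1. lra. }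
  assert (HcU : forall y, U y -> c y = c a).
  { intros y Uy. apply Hba. pose proof (HUb y Uy). lra. }
  assert (HcV : forall y, V y -> c y = c a).
  { intros y Vy. rewrite Hcab. apply Hbb. pose proof (HVb y Vy). lra. }
  assert (HwUV : forall i, (i < n)%nat -> ~ U (w i) /\ ~ V (w i)).
  { intros i Hi. pose proof (Hb0 i Hi). pose proof (Rmin_l (d a (w i)) (d b (w i))).
    pose proof (Rmin_r (d a (w i)) (d b (w i))). split; intro H'.
    - pose proof (HUb _ H'). lra.
    - pose proof (HVb _ H'). lra. }
  destruct (lemmaE X d Hm Hc Ht Hp U V a b HU HV Ua Vb) as [f [g [HfV [HgU [Hgf [Hfg [Hfa [Hfc Hgc]]]]]]]].
  set (h := fun x => if excluded_middle_informative (U x) then f x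
                     else if excluded_middle_informative (V x) then g x else x).
  assert (hU : forall x, U x -> h x = f x).
  { intros x Ux. unfold h. destruct (excluded_middle_informative (U x)); tauto. }
  assert (hV : forall x, V x -> h x = g x).
  { intros x Vx. unfold h. destruct (excluded_middle_informative (U x)). exfalso; eauto.
    destruct (excluded_middle_informative (V x)); tauto. }
  assert (hO : forall x, ~ U x -> ~ V x -> h x = x).
  { intros x nU nV. unfold h. destruct (excluded_middle_informative (U x)); [tauto|].
    destruct (excluded_middle_informative (V x)); tauto. }
  assert (hh : forall x, h (h x) = x).
  { intro x. destruct (classic (U x)) as [Ux|nUx]; [|destruct (classic (V x)) as [Vx|nVx]].
    - rewrite (hU x Ux). rewrite hV; auto.
    - rewrite (hV x Vx). rewrite hU; auto.
    - rewrite (hO x); auto. }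
  assert (hcont : continuous_map d h).
  { intros x e He. destruct (classic (U x)) as [Ux|nUx]; [|destruct (classic (V x)) as [Vx|nVx]].
    - destruct (Hfc x Ux e He) as [de [Hde Hb]]. exists de; split; auto.
      intros y Hy. destruct (Hb y Hy). rewrite !hU; auto.
    - destruct (Hgc x Vx e He) as [de [Hde Hb]]. exists de; split; auto.
      intros y Hy. destruct (Hb y Hy). rewrite !hV; auto.
    - destruct (proj2 HU x nUx) as [e1 [He1 H1]]. destruct (proj2 HV x nVx) as [e2 [He2 H2]].
      exists (Rmin e (Rmin e1 e2)). split. repeat apply Rmin_pos; auto.
      pose proof (Rmin_l e (Rmin e1 e2)). pose proof (Rmin_r e (Rmin e1 e2)).
      pose proof (Rmin_l e1 e2). pose proof (Rmin_r e1 e2).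
      intros y Hy. rewrite !hO; auto; [lra| |]; [apply H1|apply H2]; lra. }
  exists h. split; [|split; [|split]].
  - split; auto.
  - intro x. destruct (classic (U x)) as [Ux|nUx]; [|destruct (classic (V x)) as [Vx|nVx]].
    + rewrite hU; auto. rewrite (HcV (f x)), (HcU x); auto.
    + rewrite hV; auto. rewrite (HcU (g x)), (HcV x); auto.
    + rewrite hO; auto.
  - rewrite hU; auto.
  - intros i Hi. destruct (HwUV i Hi). apply hO; auto.
Qed.

Lemma lemmaC n : forall z w : nat -> X, proper_tuple n z -> proper_tuple n w ->
  (forall i, (i < n)%nat -> c (z i) = c (w i)) ->
  exists phi psi, is_homeo d phi psi /\ (forall x, c (phi x) = c x) /\ (forall x, c (psi x) = c x) /\
    forall i, (i < n)%nat -> phi (z i) = w i.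
Proof.
  induction n as [|n IH]; intros z w Hz Hw Hzw.
  - exists (fun x => x), (fun x => x). split; [split; [apply cont_id|split; [apply cont_id|]]; auto|].
    split; auto. split; auto. intros; lia.
  - destruct (IH z w) as [phi [psi [[Hc1 [Hc2 [Hpp1 Hpp2]]] [Hcp1 [Hcp2 Hpz]]]]].
    + intros i j Hi Hj; apply Hz; lia.
    + intros i j Hi Hj; apply Hw; lia.
    + intros i Hi; apply Hzw; lia.
    + destruct (classic (phi (z n) = w n)) as [E|NE].
      * exists phi, psi. split; [split; auto|]. split; auto. split; auto.
        intros i Hi. destruct (Nat.eq_dec i n) as [->|Hin]; auto. apply Hpz; lia.
      * destruct (swap_lemma (phi (z n)) (w n) n w NE) as [h [[Hhc [_ [Hh1 _]]] [Hch [Hha Hhw]]]].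
        { rewrite Hcp1. apply Hzw; lia. }
        { intros i Hi. split.
          - rewrite <- (Hpz i Hi). intro E. apply (Hz i n); auto; try lia.
            rewrite <- (Hpp1 (z i)), <- (Hpp1 (z n)), E. auto.
          - apply Hw; lia. }
        exists (fun x => h (phi x)), (fun x => psi (h x)).
        split; [split; [apply cont_comp; auto|split; [apply cont_comp; auto|split]]|].
        -- intro x. rewrite Hh1. auto.
        -- intro x. rewrite Hpp2. auto.
        -- split; [intro x; rewrite Hch; auto|split; [intro x; rewrite Hcp2; auto|]].
           intros i Hi. destruct (Nat.eq_dec i n) as [->|Hin]; auto.
           rewrite Hpz; [|lia]. apply Hhw; lia.
Qed.

End W.

Theorem lemma1p1 (X : Type) (d : X -> X -> R) :
  is_cantor_space d -> property_star d.
Proof.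
  intros [Hm [Hc [Hp Ht]]] eps Heps.
  destruct (S1 X d Hm Hc Ht (fun _ => True) (eps / 2) (clopen_True X d) ltac:(lra)) as [k [c [_ [_ [Hg3 Hg4]]]]].
  assert (Hcl : forall x, exists e, 0 < e /\ forall y, d x y < e -> c y = c x).
  { intro x. destruct (Hg3 x I) as [e [He Hb]]. exists e; split; auto. intros y Hy; apply Hb; auto. }
  pose proof Hcl as Hcl'. apply choice_fun in Hcl' as [ef Hef].
  assert (Hef' : forall x, exists e, 0 < e /\ forall y, d x y < e -> c y = c x) by exact Hcl.
  destruct (Hc X (fun x y => d x y < ef x / 2)) as [l Hl].
  - intro x. apply open_ball; auto.
  - intro x. exists x. rewrite (d_refl X d Hm). pose proof (proj1 (Hef x)). lra.
  - destruct (min_list l (fun x => ef x / 2)) as [eta [Heta Hbeta]].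
    { intro x. pose proof (proj1 (Hef x)). lra. }
    exists eta. split; auto.
    intros n z w _ Hz Hw Hzw.
    destruct (lemmaC X d Hm Hc Ht Hp c Hcl n z w Hz Hw) as [phi [psi [Hh [Hc1 [Hc2 Hpz]]]]].
    { intros i Hi. specialize (Hzw i Hi). destruct (Hl (z i)) as [x [Hx Hdx]].
      pose proof (Hbeta x Hx). destruct (Hef x) as [_ Hb].
      rewrite (Hb (z i)) by lra. symmetry. apply Hb.
      pose proof (d_tri X d Hm x (z i) (w i)). lra. }
    exists phi, psi. split; auto. split; auto.
    exists (eps / 2). split. lra. intro x. split; left; apply Hg4; auto.
Qed.
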